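(* Let $\mathbf{k}$ be a field of characteristic zero, let $(C^\bullet,\partial)$ be a complex of finite-dimensional $\mathbf{k}$-vector spaces of odd length $d=2r-1$ with a chirality operator $\Gamma$, and let $\mathcal B=\Gamma\partial+\partial\Gamma$. If $\mathcal B:C^\bullet\to C^\bullet$ is bijective, then the complex $(C^\bullet,\partial)$ is acyclic and $C^j=C^j_+\oplus C^j_-$ for all $j=0,\dots,d$, where $C^j_+=\operatorname{Ker}(\partial\circ\Gamma)\cap C^j$ and $C^j_-=\operatorname{Ker}\partial\cap C^j$.
   Context: A chirality operator is an involution $\Gamma:C^\bullet\to C^\bullet$ with $\Gamma(C^j)=C^{d-j}$ for all $j$. *)

(* Defs.v *)
From HB Require Import structures.
From mathcomp Require Import all_boot all_order all_algebra.
Set Implicit Arguments. Unset Strict Implicit. Unset Printing Implicit Defensive.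
Import GRing.Theory.
Local Open Scope ring_scope.
Local Open Scope vspace_scope.

(* A cochain complex C^0 -> C^1 -> ... -> C^d of finite-dimensional K-vector
   spaces is represented inside its total space V = (+)_j C^j: the graded
   pieces are subspaces C j (j = 0..d) of V forming a direct sum equal to V,
   and the differential is a linear endomorphism of V. *)
Definition graded_total (K : fieldType) (V : vectType K) (d : nat)
    (C : nat -> {vspace V}) : Prop :=
  (\sum_(j < d.+1) C j)%VS = fullv /\ directv (\sum_(j < d.+1) C j).

Definition is_complex (K : fieldType) (V : vectType K) (d : nat)
    (C : nat -> {vspace V}) (del : 'End(V)) : Prop :=
  [/\ graded_total d C,
      (forall j, (j < d)%N -> (del @: C j <= C j.+1)%VS),
      del @: C d = 0%VS &
      (del \o del)%VF = 0%R].

Definition is_chirality (K : fieldType) (V : vectType K) (d : nat)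
    (C : nat -> {vspace V}) (Gam : 'End(V)) : Prop :=
  (Gam \o Gam)%VF = \1%VF /\ (forall j, (j <= d)%N -> Gam @: C j = C (d - j)%N).

Definition acyclic (K : fieldType) (V : vectType K) (d : nat)
    (C : nat -> {vspace V}) (del : 'End(V)) : Prop :=
  (lker del :&: C 0%N = 0)%VS /\
  (forall j, (j < d)%N -> (lker del :&: C j.+1)%VS = del @: C j).

(* Main.v *)
Require Import Defs.
From HB Require Import structures.
From mathcomp Require Import all_boot all_order all_algebra.
From mathcomp Require Import zify.
Import GRing.Theory.
Local Open Scope ring_scope.
Local Open Scope vspace_scope.

Theorem lemma5p1 (K : fieldType) (V : vectType K) (r d : nat)
    (C : nat -> {vspace V}) (del Gam : 'End(V)) :
  [pchar K] =i pred0 ->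
  (0 < r)%N -> d = (2 * r - 1)%N ->
  is_complex d C del ->
  is_chirality d C Gam ->
  bijective (fun v : V => ((Gam \o del)%VF + (del \o Gam)%VF)%R v) ->
  acyclic d C del /\
  (forall j, (j <= d)%N ->
     let Cplus := (lker (del \o Gam)%VF :&: C j)%VS in
     let Cminus := (lker del :&: C j)%VS in
     C j = (Cplus + Cminus)%VS /\ directv (Cplus + Cminus)%VS).
Proof.
Local Open Scope ring_scope.
move=> _ _ _ [_ delS delD dd] [gg GamC] Bbij.
have ddE v : del (del v) = 0.
  by have := congr1 (fun f : 'End(V) => f v) dd; rewrite /= comp_lfunE lfunE.
have ggE v : Gam (Gam v) = v.
  by have := congr1 (fun f : 'End(V) => f v) gg; rewrite /= comp_lfunE id_lfunE.
have Binj := bij_inj Bbij.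
pose H : 'End(V) := ((del \o (Gam \o del \o Gam))%VF + ((Gam \o del \o Gam) \o del)%VF)%R.
have HE v : H v = del (Gam (del (Gam v))) + Gam (del (Gam (del v))).
  by rewrite /H add_lfunE !comp_lfunE.
have DE v : del v + Gam (del (Gam v)) = ((Gam \o del)%VF + (del \o Gam)%VF) (Gam v).
  by rewrite add_lfunE !comp_lfunE ggE addrC.
have Dinj v : del v + Gam (del (Gam v)) = 0 -> v = 0.
  move=> h; apply: (can_inj ggE); rewrite linear0; apply: Binj.
  by rewrite /= -DE h linear0.
have HDD v : H v = let w := del v + Gam (del (Gam v)) in del w + Gam (del (Gam w)).
  rewrite HE /= !linearD /= ?ggE ?ddE ?add0r ?addr0 ?linear0 ?add0r ?addr0.
  by [].
have Hinj : injective H.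
  move=> u v huv; apply/eqP; rewrite -subr_eq0; apply/eqP.
  have := HDD (u - v); rewrite /= linearB /= huv subrr => h.
  apply: (Dinj); apply: (Dinj); exact: esym h.
have L1 k x : (k < d)%N -> x \in C k -> del x \in C k.+1.
  move=> hk hx; apply: (subvP (delS k hk)); exact: memv_img.
have L2 x : x \in C d -> del x = 0.
  by move=> hx; apply/eqP; rewrite -memv0 -delD; apply: memv_img.
have L3 k x : (0 < k <= d)%N -> x \in C k -> Gam (del (Gam x)) \in C k.-1.
  case/andP=> k0 kd hx.
  have g1 : Gam x \in C (d - k)%N by rewrite -GamC //; apply: memv_img.
  have g2 : del (Gam x) \in C (d - k)%N.+1 by apply: L1 g1; lia.
  have -> : k.-1 = (d - (d - k).+1)%N by lia.
  rewrite -GamC; first exact: memv_img.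
  by lia.
have L4 x : x \in C 0 -> Gam (del (Gam x)) = 0.
  move=> hx; rewrite L2 ?linear0 //; rewrite -(subn0 d) -GamC //; exact: memv_img.
have HC j x : (j <= d)%N -> x \in C j -> H x \in C j.
  move=> jd hx; rewrite HE; apply: rpredD.
    case: j jd hx => [|j] jd hx; first by rewrite L4 // linear0 rpred0.
    by apply: L1 (L3 j.+1 x _ hx) => //; rewrite jd.
  case: (ltngtP j d) jd => // [jd|jd] _; last by subst j; rewrite (L2 x hx) !linear0 rpred0.
  have := L3 j.+1 (del x) _ (L1 _ _ jd hx); apply; by rewrite jd.
have Hsurj j x : (j <= d)%N -> x \in C j -> exists2 y, y \in C j & x = H y.
  move=> jd hx.
  have e : H @: C j = C j.
    apply/eqP; rewrite eqEdim limg_dim_eq ?leqnn ?andbT.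
      apply/subvP => z /memv_imgP [y hy ->]; exact: HC.
    by move/lker0P/eqP: Hinj => ->; rewrite capv0.
  by move: hx; rewrite -{1}e => /memv_imgP [y hy ->]; exists y.
have Kdel j x : (j <= d)%N -> x \in C j -> del x = 0 ->
    exists2 y, y \in C j & x = del (Gam (del (Gam y))).
  move=> jd hx dx; have [y hy ey] := Hsurj j x jd hx.
  have dy : del y = 0.
    apply: Hinj; rewrite linear0 HE ddE !linear0 addr0.
    by rewrite -dx ey HE linearD /= ddE add0r.
  by exists y => //; rewrite ey HE dy !linear0 addr0.
split.
  split.
    apply/eqP; rewrite -subv0; apply/subvP => x /memv_capP [kx hx].
    rewrite memv_ker in kx; have [y hy ->] := Kdel 0%N x (leq0n _) hx (eqP kx).
    by rewrite L4 // linear0 memv0.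
  move=> j jd; apply/eqP; rewrite eqEsubv; apply/andP; split.
    apply/subvP => x /memv_capP [kx hx]; rewrite memv_ker in kx.
    have [y hy ->] := Kdel j.+1 x jd hx (eqP kx).
    by apply: memv_img; apply: (L3 j.+1) => //; rewrite jd.
  apply/subvP => x /memv_imgP [z hz ->]; rewrite memv_cap memv_ker ddE eqxx /=.
  exact: L1.
move=> j jd /=; split.
  apply/eqP; rewrite eqEsubv; apply/andP; split; last first.
    by rewrite subv_add !capvSr.
  apply/subvP => x hx; have [y hy ->] := Hsurj j x jd hx.
  rewrite HE addrC; apply: memv_add; rewrite memv_cap.
    rewrite memv_ker comp_lfunE ggE ddE eqxx /=.
    case: (ltngtP j d) jd => // [jd'|jd'] _; last by subst j; rewrite (L2 y hy) !linear0 rpred0.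
    by have := L3 j.+1 (del y) _ (L1 _ _ jd' hy); apply; rewrite jd'.
  rewrite memv_ker ddE eqxx /=.
  case: j jd hx hy => [|j] jd hx hy; first by rewrite (L4 y hy) linear0 rpred0.
  by apply: L1 (L3 j.+1 y _ hy) => //; rewrite jd.
apply/directv_addP; apply/eqP; rewrite -subv0; apply/subvP => x.
rewrite !memv_cap !memv_ker comp_lfunE => /andP [/andP [/eqP k1 _] /andP [/eqP k2 _]].
rewrite memv0; apply/eqP; apply: (@Hinj x 0); by rewrite HE k1 k2 !linear0 addr0.
Qed.
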